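(* Let $F$ be a $\Theta$-graph of order $\ell$ (so $\ell\ge 4$), and let $t$ be an odd integer with $1\le t<\ell$. Let $A\cup B$ be a partition of $V(F)$ with $A\ne\emptyset$ such that every path of length $t$ in $F$ that starts at a vertex of $A$ ends at a vertex of $A$. Then $A=V(F)$.
   Context: A $\Theta$-graph of order $\ell$ ($\ell\ge 4$) is a cycle of length $\ell$ together with one chord (an additional edge joining two non-consecutive vertices of the cycle), on exactly $\ell$ vertices. A path of length $t$ is a path with $t$ edges (and $t+1$ distinct vertices). *)

(* Defs.v *)
From mathcomp Require Import all_boot.
Set Implicit Arguments. Unset Strict Implicit. Unset Printing Implicit Defensive.

(* A finite simple graph is given by an edge relation e on a finType T
   (vertex set V(F) = T). *)

(* [cycle_adj s u v]: u and v are consecutive on the cycle whose vertices,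
   in cyclic order, are listed by s (path.v's [next]). *)
Definition cycle_adj (T : eqType) (s : seq T) (u v : T) : bool :=
  (u \in s) && (v \in s) && ((next s u == v) || (next s v == u)).

(* e is a Theta-graph of order l: T has exactly l >= 4 vertices, which can be
   listed as a Hamiltonian cycle s, and e consists of the cycle edges together
   with exactly one chord {x, y}, x, y non-consecutive on the cycle. *)
Definition is_theta_graph (T : finType) (e : rel T) (l : nat) : Prop :=
  4 <= l /\ #|T| = l /\
  exists (s : seq T) (x y : T),
    [/\ uniq s, size s = l, (forall v : T, v \in s),
        (x != y) && ~~ cycle_adj s x y &
        (forall u v : T, e u v = cycle_adj s u v || ((u == x) && (v == y))
                                                || ((u == y) && (v == x)))].

Definition is_path_of_length (T : eqType) (e : rel T) (t : nat) (x : T) (p : seq T) : bool :=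
  [&& size p == t, uniq (x :: p) & path e x p].

(* Main.v *)
Require Import Defs.
From mathcomp Require Import all_boot all_algebra.
From mathcomp Require Import zify ring.
Set Implicit Arguments. Unset Strict Implicit. Unset Printing Implicit Defensive.
Import GRing.Theory Num.Theory.

Section IntArith.
Local Open Scope ring_scope.

Lemma per_mul (P : int -> bool) (a : int) :
  (forall z, P (z + a) = P z) -> forall (n z : int), P (z + n * a) = P z.
Proof.
move=> Ha.
have pos : forall (n : nat) z, P (z + n%:Z * a) = P z.
  elim=> [|n IH] z; first by rewrite mul0r addr0.
  have -> : z + (n.+1)%:Z * a = (z + n%:Z * a) + a.
    by rewrite -addn1 PoszD mulrDl mul1r addrA.
  by rewrite Ha IH.
case=> n z; first exact: pos.
have E : z + Negz n * a + (n.+1)%:Z * a = z by rewrite NegzE; ring.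
by rewrite -[in RHS]E pos.
Qed.

Lemma Pper (P : int -> bool) (a : int) :
  (forall z, P (z + a) = P z) -> forall (u v n : int), v = u + n * a -> P v = P u.
Proof. by move=> Ha u v n ->; apply: per_mul. Qed.

Lemma rep (g a u : int) : 0 < g -> exists n : int, a <= u + n * g < a + g.
Proof.
move=> g0; exists (- ((u - a) %/ g)%Z).
have H := divz_eq (u - a) g.
have H1 := modz_ge0 (u - a) (lt0r_neq0 g0).
have H2 := ltz_pmod (u - a) g0.
rewrite mulNr.
move: H H1 H2; set q := ((u - a) %/ g)%Z; set r := ((u - a) %% g)%Z.
move=> H H1 H2. lia.
Qed.

Lemma window (R : int -> Prop) (g a : int) : 0 < g ->
  (forall z n, R (z + n * g) -> R z) ->
  (forall z, a <= z < a + g -> R z) -> forall z, R z.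
Proof.
move=> g0 Hp Hw z; have [n Hn] := rep a z g0.
by apply: (Hp z n); apply: Hw.
Qed.

End IntArith.

Lemma modz_eq (m d q r : int) : (0 <= r < d)%R -> m = (q * d + r)%R -> (m %% d)%Z = r.
Proof. by move=> Hr ->; rewrite modzMDl modz_small. Qed.

Lemma small_mul (d L : int) : (0 < L -> - L < d * L < L -> d = 0)%R.
Proof. move=> H1 H2. nia. Qed.

Ltac ifs := repeat (case: ifP => [?|/negbT ?]).

Section Core.
Variables (T : finType) (e : rel T) (s : seq T) (x0 : T) (ia ib t : nat) (A : {set T}).
Hypothesis Hu : uniq s.
Hypothesis Hall : forall v, v \in s.
Hypothesis Hsz : 4 <= size s.
Hypothesis Hia : ia < size s.
Hypothesis Hib : ib < size s.
Hypothesis Hab : ia != ib.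
Hypothesis Hna : ~~ cycle_adj s (nth x0 s ia) (nth x0 s ib).
Hypothesis He : forall u v, e u v = cycle_adj s u v
   || ((u == nth x0 s ia) && (v == nth x0 s ib)) || ((u == nth x0 s ib) && (v == nth x0 s ia)).

Local Open Scope ring_scope.
Local Notation n := (size s).
Local Notation L := (Posz (size s)).

Definition idx (z : int) : nat := absz ((z + ia%:Z) %% L)%Z.
Definition w z := nth x0 s (idx z).

Lemma L0 : 0 < L. Proof. lia. Qed.

Lemma idx_spec z q (r : nat) : (r < n)%N -> z + ia%:Z = q * L + r%:Z -> idx z = r.
Proof.
move=> Hr E; rewrite /idx (modz_eq (q := q) (r := r%:Z)) //; lia.
Qed.

Lemma idx_ex z : (idx z < n)%N /\ exists q, z + ia%:Z = q * L + (idx z)%:Z.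
Proof.
have g0 : L != 0 by have := L0; lia.
have H1 := modz_ge0 (z + ia%:Z) g0.
have H2 := ltz_pmod (z + ia%:Z) L0.
rewrite /idx; split.
  rewrite -(ltz_nat) gez0_abs //.
exists ((z + ia%:Z) %/ L)%Z; rewrite gez0_abs //; exact: divz_eq.
Qed.

Lemma w_inj a b lo : lo <= a < lo + L -> lo <= b < lo + L -> w a = w b -> a = b.
Proof.
move=> Ha Hb; rewrite /w => /eqP; rewrite nth_uniq; first 1 last.
- by case: (idx_ex a).
- by case: (idx_ex b).
- by [].
move/eqP=> E.
have [_ [qa Ea]] := idx_ex a; have [_ [qb Eb]] := idx_ex b.
rewrite E in Ea.
have L0' := L0.
have := @small_mul (qa - qb) L L0'.
have -> : (qa - qb) * L = a - b by rewrite mulrBl; lia.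
move=> /(_ ltac:(lia)) ?; lia.
Qed.


Lemma e_sym u v : e u v = e v u.
Proof.
rewrite !He /cycle_adj.
by case: (u \in s); case: (v \in s); case: (next s u == v); case: (next s v == u);
  case: (u == nth x0 s ia); case: (u == nth x0 s ib); case: (v == nth x0 s ia);
  case: (v == nth x0 s ib).
Qed.

Lemma w_next_ca z : cycle_adj s (w z) (w (z + 1)).
Proof.
rewrite /cycle_adj !Hall /=; apply/orP; left; apply/eqP.
have [Hlt [q Eq]] := idx_ex z.
rewrite next_nth Hall {1}/w index_uniq //.
rewrite /w.
case: (ltnP (idx z).+1 n) => H.
  rewrite (@idx_spec (z + 1) q (idx z).+1) //; last by lia.
  move: H Hlt; case: s => [|y p] //= H1 H2.
  by apply: set_nth_default.
rewrite (@idx_spec (z + 1) (q + 1) 0); [|lia|lia].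
move: H Hlt; case: s => [|y p] //= H1 H2.
by rewrite nth_default //; lia.
Qed.


Lemma w_next z : e (w z) (w (z + 1)).
Proof. by rewrite He w_next_ca. Qed.

Lemma cycle_adj_sym u v : cycle_adj s u v = cycle_adj s v u.
Proof. by rewrite /cycle_adj; case: (u \in s); case: (v \in s); rewrite //= orbC. Qed.

Lemma w_per z : w (z + L) = w z.
Proof.
have [Hlt [q Eq]] := idx_ex z.
by rewrite /w (@idx_spec (z + L) (q + 1) (idx z)) //; lia.
Qed.

Definition k : int := ((ib%:Z - ia%:Z) %% L)%Z.

Lemma w0 : w 0 = nth x0 s ia.
Proof. by rewrite /w (@idx_spec 0 0 ia) //; lia. Qed.

Lemma k_bounds : 0 <= k < L.
Proof.
have g0 : L != 0 by have := L0; lia.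
by rewrite /k modz_ge0 // ltz_pmod // L0.
Qed.

Lemma wk : w k = nth x0 s ib.
Proof.
have H := divz_eq (ib%:Z - ia%:Z) L.
rewrite /w (@idx_spec k (- ((ib%:Z - ia%:Z) %/ L)%Z) ib) //.
rewrite /k; move: H; set q := ((ib%:Z - ia%:Z) %/ L)%Z; set r := ((ib%:Z - ia%:Z) %% L)%Z.
move=> H; lia.
Qed.

Lemma w_chord : e (w 0) (w k).
Proof. by rewrite He w0 wk !eqxx /= orbT. Qed.

Lemma k_ge2 : 2 <= k.
Proof.
have [H1 H2] := andP k_bounds.
case: (ltrP k 2) => // Hk.
have : (k == 0) || (k == 1) by lia.
case/orP=> /eqP E.
  have : w 0 = w k by rewrite E.
  rewrite w0 wk => /eqP; rewrite nth_uniq // => /eqP E2.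
  by move: Hab; rewrite E2 eqxx.
have := w_next_ca 0.
by rewrite add0r -E w0 wk (negbTE Hna).
Qed.

Lemma k_leL2 : k <= L - 2.
Proof.
have [H1 H2] := andP k_bounds.
case: (lerP k (L - 2)) => // Hk.
have E : k = L - 1 by lia.
have := w_next_ca k.
have -> : k + 1 = 0 + L by lia.
by rewrite w_per cycle_adj_sym w0 wk (negbTE Hna).
Qed.

Definition adjZ (a b : int) := (b == a + 1) || (a == b + 1) || ((a == 0) && (b == k)) || ((a == k) && (b == 0)).

Lemma adjZ_sym a b : adjZ a b = adjZ b a.
Proof. rewrite /adjZ; by case: (b == a + 1); case: (a == b + 1); case: (a == 0); case: (b == k); case: (a == k); case: (b == 0). Qed.

Lemma adjZ_e a b : adjZ a b -> e (w a) (w b).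
Proof.
rewrite /adjZ; case/orP; [case/orP; [case/orP|] |].
- by move/eqP=> ->; apply: w_next.
- by move/eqP=> ->; rewrite e_sym; apply: w_next.
- by case/andP=> /eqP -> /eqP ->; apply: w_chord.
- by case/andP=> /eqP -> /eqP ->; rewrite e_sym; apply: w_chord.
Qed.

Hypothesis HA : forall x p, x \in A -> is_path_of_length e t x p -> last x p \in A.

Definition P z := w z \in A.

Lemma last_iota (a m : nat) : last a (iota a.+1 m) = (a + m)%N.
Proof. elim: m a => [|m IH] a /=; first by rewrite addn0. by rewrite IH addnS. Qed.

Lemma path_f (f : nat -> int) (m a : nat) :
  (forall i, (a <= i < a + m)%N -> e (w (f i)) (w (f i.+1))) ->
  path e (w (f a)) [seq w (f i) | i <- iota a.+1 m].
Proof.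
elim: m a => [|m IH] a H //=.
rewrite H ?IH //=; first by move=> i Hi; apply: H; lia.
lia.
Qed.

Lemma gpath1 (f : nat -> int) lo :
  (forall i, (i < t)%N -> adjZ (f i) (f i.+1)) ->
  (forall i, (i <= t)%N -> lo <= f i < lo + L) ->
  (forall i j, (i <= t)%N -> (j <= t)%N -> f i = f j -> i = j) ->
  P (f 0%N) -> P (f t).
Proof.
move=> Hadj Hr Hinj HP.
have := HA (p := [seq w (f i) | i <- iota 1 t]) HP.
have -> : last (w (f 0%N)) [seq w (f i) | i <- iota 1 t] = w (f t).
  by rewrite (last_map (fun i => w (f i)) _ 0%N) last_iota add0n.
apply.
rewrite /is_path_of_length size_map size_iota eqxx andTb.
apply/andP; split.
  have -> : w (f 0%N) :: [seq w (f i) | i <- iota 1 t] = map (fun i => w (f i)) (iota 0 t.+1) by [].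
  rewrite map_inj_in_uniq ?iota_uniq // => i j; rewrite !mem_iota => Hi Hj E.
  apply: Hinj; try lia.
  apply: (w_inj (lo := lo)) => //; apply: Hr; lia.
apply: path_f => i Hi; apply: adjZ_e; apply: Hadj; lia.
Qed.

Lemma gpath (f : nat -> int) lo :
  (forall i, (i < t)%N -> adjZ (f i) (f i.+1)) ->
  (forall i, (i <= t)%N -> lo <= f i < lo + L) ->
  (forall i j, (i <= t)%N -> (j <= t)%N -> f i = f j -> i = j) ->
  P (f 0%N) = P (f t).
Proof.
move=> Hadj Hr Hinj; apply/idP/idP; first exact: gpath1 Hadj Hr Hinj.
move=> H.
have := @gpath1 (fun i => f (t - i)%N) lo.
rewrite subn0 subnn; apply => //.
- move=> i Hi; rewrite adjZ_sym.
  have -> : (t - i = (t - i.+1).+1)%N by lia.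
  apply: Hadj; lia.
- move=> i Hi; apply: Hr; lia.
- move=> i j Hi Hj /Hinj; lia.
Qed.


Hypothesis Ht0 : (0 < t)%N.
Hypothesis HtL : (t < n)%N.
Hypothesis Hodd : odd t.

Ltac adjtac := rewrite /adjZ; ifs; first
  [ apply/orP; left; apply/orP; left; apply/orP; left; apply/eqP; lia
  | apply/orP; left; apply/orP; left; apply/orP; right; apply/eqP; lia
  | apply/orP; left; apply/orP; right; apply/andP; split; apply/eqP; lia
  | lia ].

Ltac famtac F := have := k_ge2; have := k_leL2; move=> ? ?; first
  [ move=> i Hi; rewrite /F; adjtac
  | move=> i Hi; rewrite /F; ifs; lia
  | move=> i i' Hi Hi'; rewrite /F; ifs; lia ].

Lemma fam_cyc z : P z = P (z + t%:Z).
Proof.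
pose F := fun i : nat => z + i%:Z.
have E := @gpath F z.
have E0 : F 0%N = z by rewrite /F addr0.
rewrite -{1}E0 E //; famtac F.
Qed.


Lemma fam_R1 (j : int) : 0 <= j -> t%:Z - k <= j -> j <= L - k - 1 -> j <= t%:Z - 1 ->
  P (- j) = P (k + j + 1 - t%:Z).
Proof.
move=> H1 H2 H3 H4.
pose F := fun i : nat => if i%:Z <= j then - j + i%:Z else k + j + 1 - i%:Z.
have E := @gpath F (- j).
have E0 : F 0%N = - j by rewrite /F; ifs; lia.
have Et : F t = k + j + 1 - t%:Z by rewrite /F; ifs; lia.
rewrite -[in LHS]E0 -Et; apply: E; famtac F.
Qed.

Lemma fam_R2 (j : int) : 0 <= j -> j <= k - 1 -> j <= t%:Z - 1 -> t%:Z - 1 - j <= L - k - 1 ->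
  P j = P (k + t%:Z - 1 - j).
Proof.
move=> H1 H2 H3 H4.
pose F := fun i : nat => if i%:Z <= j then j - i%:Z else k + i%:Z - j - 1.
have E := @gpath F 0.
have E0 : F 0%N = j by rewrite /F; ifs; lia.
have Et : F t = k + t%:Z - 1 - j by rewrite /F; ifs; lia.
rewrite -[in LHS]E0 -Et; apply: E; famtac F.
Qed.

Lemma fam_FF (j : int) : 0 <= j -> j <= t%:Z - 1 -> t%:Z <= L - k ->
  P (- j) = P (k + t%:Z - 1 - j).
Proof.
move=> H1 H2 H3.
pose F := fun i : nat => if i%:Z <= j then - j + i%:Z else k + i%:Z - j - 1.
have E := @gpath F (- j).
have E0 : F 0%N = - j by rewrite /F; ifs; lia.
have Et : F t = k + t%:Z - 1 - j by rewrite /F; ifs; lia.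
rewrite -[in LHS]E0 -Et; apply: E; famtac F.
Qed.


Lemma P_L z : P (z + L) = P z.
Proof. by rewrite /P w_per. Qed.

Lemma P_t z : P (z + t%:Z) = P z.
Proof. by rewrite [RHS]fam_cyc. Qed.

Let gn := gcdn n t.
Let g : int := gn%:Z.

Lemma gn_facts : [/\ (0 < gn)%N, (gn <= t)%N, (gn <= n - t)%N & odd gn].
Proof.
have d1 : (gn %| n)%N by apply: dvdn_gcdl.
have d2 : (gn %| t)%N by apply: dvdn_gcdr.
have Ho : odd gn.
  by move: Hodd; rewrite -(divnK d2) oddM => /andP [].
split => //.
- by rewrite gcdn_gt0 Ht0 orbT.
- exact: dvdn_leq.
- apply: dvdn_leq; first by lia.
  exact: dvdn_sub.
Qed.

Lemma P_g z : P (z + g) = P z.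
Proof.
have [u [v E]] := Bezoutz L t%:Z.
have -> : g = gcdz L t%:Z by [].
rewrite -E addrA.
by rewrite (per_mul P_t) (per_mul P_L).
Qed.


Lemma g_facts : [/\ 0 < g, g <= t%:Z, g <= L - t%:Z & exists h : nat, g = (2 * h + 1)%:Z].
Proof.
have [H1 H2 H3 H4] := gn_facts.
split; rewrite /g; try lia.
exists gn./2; have := odd_double_half gn; rewrite H4 => E; lia.
Qed.

Lemma Pg (m z : int) : P (z + m * g) = P z.
Proof. have := @per_mul P g P_g; apply. Qed.

Lemma P2_caseI : g <= k -> g <= L - k -> forall z, P (z + 2) = P z.
Proof.
move=> Hk Hm.
have [g0 gt gLt _] := g_facts.
have kb := k_ge2; have kb2 := k_leL2.
have [a2 Ha2] : exists a2 : int, [/\ 0 <= a2, t%:Z - (L - k) <= a2, a2 + g <= k & a2 + g <= t%:Z].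
  case: (lerP (t%:Z) (L - k)) => H; [exists 0 | exists (t%:Z - (L - k))]; split; lia.
have [a1 Ha1] : exists a1 : int, [/\ 0 <= a1, t%:Z - k <= a1, a1 + g <= L - k & a1 + g <= t%:Z].
  case: (lerP (t%:Z) k) => H; [exists 0 | exists (t%:Z - k)]; split; lia.
case: Ha2 => A1 A2 A3 A4; case: Ha1 => B1 B2 B3 B4.
apply: (@window (fun z => P (z + 2) = P z) g a2 g0).
  move=> z m; rewrite -(Pg m z) -(Pg m (z + 2)).
  by have -> : z + 2 + m * g = z + m * g + 2 by lia.
move=> z Hz.
have E1 : P z = P (k - 1 - z).
  rewrite (fam_R2 (j := z)); try lia.
  apply: (Pper P_t (n := 1)); lia.
have [nn Hnn] := rep a1 (z + 1 - k) g0.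
have E2 := fam_R1 (j := z + 1 - k + nn * g).
rewrite E1.
have -> : P (k - 1 - z) = P (- (z + 1 - k + nn * g)).
  symmetry; apply: (Pper P_g (n := - nn)); lia.
rewrite E2; try lia.
have -> : P (k + (z + 1 - k + nn * g) + 1 - t%:Z) = P (z + 2 + nn * g).
  apply: (Pper P_t (n := -1)); lia.
by rewrite Pg.
Qed.


Lemma P2_caseII : k < g -> forall z, P (z + 2) = P z.
Proof.
move=> Hk.
have [g0 gt gLt _] := g_facts.
have kb := k_ge2; have kb2 := k_leL2.
have HT : forall z, P (z + (k - 1)) = P z.
  apply: (@window (fun z => P (z + (k - 1)) = P z) g (1 - g) g0).
    move=> z m; rewrite -(Pg m z) -(Pg m (z + (k - 1))).
    by have -> : z + (k - 1) + m * g = z + m * g + (k - 1) by lia.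
  move=> z Hz.
  have := fam_FF (j := - z); rewrite !opprK => ->; try lia.
  symmetry; apply: (Pper P_t (n := 1)); lia.
have k0 : 0 < k - 1 by lia.
apply: (@window (fun z => P (z + 2) = P z) (k - 1) 0 k0).
  move=> z m; rewrite -(per_mul HT m z) -(per_mul HT m (z + 2)).
  by have -> : z + 2 + m * (k - 1) = z + m * (k - 1) + 2 by lia.
move=> z Hz.
have E1 : P z = P (k - 1 - z).
  rewrite (fam_R2 (j := z)); try lia.
  apply: (Pper P_t (n := 1)); lia.
have E2 := fam_R1 (j := t%:Z - k + 1 + z).
rewrite E1.
have -> : P (k - 1 - z) = P (- (t%:Z - k + 1 + z)).
  apply: (Pper P_t (n := 1)); lia.
rewrite E2; try lia.
congr P; lia.
Qed.

Lemma P2 : g <= L - k -> forall z, P (z + 2) = P z.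
Proof.
move=> Hm; case: (ltrP k g) => Hk; first exact: P2_caseII.
exact: P2_caseI.
Qed.

Lemma P_all : g <= L - k -> forall z, P z = P 0.
Proof.
move=> Hm.
have [g0 _ _ [h Eh]] := g_facts.
have P1 : forall z, P (z + 1) = P z.
  move=> z; rewrite -(Pg 1 (z + 1)).
  have -> : z + 1 + 1 * g = z + (h.+1)%:Z * 2 by rewrite Eh; lia.
  exact: per_mul (P2 Hm) _ _.
move=> z; have := per_mul P1 z 0; rewrite add0r mulr1 => ->; done.
Qed.


Lemma core_set : g <= L - k -> A != set0 -> A = [set: T].
Proof.
move=> Hm /set0Pn [v Hv].
have wi : forall u, w ((index u s)%:Z - ia%:Z) = u.
  move=> u; rewrite /w (@idx_spec _ 0 (index u s)); [exact: nth_index | rewrite index_mem | lia].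
  exact: Hall.
apply/setP => u; rewrite inE.
have := P_all Hm ((index u s)%:Z - ia%:Z).
rewrite -(P_all Hm ((index v s)%:Z - ia%:Z)) /P !wi => ->.
exact Hv.
Qed.

Lemma k_swap : k + ((ia%:Z - ib%:Z) %% L)%Z = L.
Proof.
have H := divz_eq (ib%:Z - ia%:Z) L.
have H' := divz_eq (ia%:Z - ib%:Z) L.
have g0 : L != 0 by have := L0; lia.
have H1 := modz_ge0 (ia%:Z - ib%:Z) g0.
have H2 := ltz_pmod (ia%:Z - ib%:Z) L0.
have [k0 k1] := andP k_bounds.
have kb := k_ge2.
move: H H' H1 H2 k0 k1 kb; rewrite /k.
set q := ((ib%:Z - ia%:Z) %/ L)%Z; set r := ((ib%:Z - ia%:Z) %% L)%Z.
set q' := ((ia%:Z - ib%:Z) %/ L)%Z; set r' := ((ia%:Z - ib%:Z) %% L)%Z.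
move=> H H' H1 H2 k0 k1 kb.
have := @small_mul (q + q' + 1) L L0.
have -> : (q + q' + 1) * L = L - r - r' by rewrite !mulrDl mul1r; lia.
move=> /(_ ltac:(lia)) E.
have : (q + q' + 1) * L = 0 by rewrite E mul0r.
rewrite !mulrDl mul1r; lia.
Qed.

End Core.


Theorem corollary5p1 (T : finType) (e : rel T) (l t : nat) (A : {set T}) :
  is_theta_graph e l ->
  odd t -> 1 <= t -> t < l ->
  A != set0 ->
  (forall (x : T) (p : seq T), x \in A -> is_path_of_length e t x p -> last x p \in A) ->
  A = [set: T].
Proof.
move=> [H4 [Hcard [s [x [y [Hu /eqP Hsz Hall /andP [Hxy Hna] He]]]]]] Hodd Ht1 Htl HA0 HA.
have Hsz' : size s = l by apply/eqP.
have Ex : nth x s (index x s) = x by apply: nth_index.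
have Ey : nth x s (index y s) = y by apply: nth_index.
have Hia : index x s < size s by rewrite index_mem.
have Hib : index y s < size s by rewrite index_mem.
have Hab : index x s != index y s.
  by apply: contraNneq Hxy => E; rewrite -Ex -Ey E.
have H4' : 3 < size s by rewrite Hsz'.
have Htl' : t < size s by rewrite Hsz'.
have He1 : forall u v, e u v = cycle_adj s u v
   || ((u == nth x s (index x s)) && (v == nth x s (index y s)))
   || ((u == nth x s (index y s)) && (v == nth x s (index x s))) by move=> u v; rewrite Ex Ey.
have He2 : forall u v, e u v = cycle_adj s u v
   || ((u == nth x s (index y s)) && (v == nth x s (index x s)))
   || ((u == nth x s (index x s)) && (v == nth x s (index y s))) by move=> u v; rewrite Ex Ey -orbA (orbC (_ && _)) orbA.
have Hna1 : ~~ cycle_adj s (nth x s (index x s)) (nth x s (index y s)) by rewrite Ex Ey.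
have Hna2 : ~~ cycle_adj s (nth x s (index y s)) (nth x s (index x s)) by rewrite Ex Ey cycle_adj_sym.
have Hab2 : index y s != index x s by rewrite eq_sym.
have [g0 gt gLt _] := g_facts Hu H4' Hia Hib Hab Hna1 Ht1 Htl' Hodd.
have Ks := k_swap Hu Hall H4' Hia Hib Hab Hna1 Ht1 Htl' Hodd.
have Kb := k_bounds Hu H4' Hia Hib Hab Hna1.
case: (lerP (gcdn (size s) t)%:Z ((size s)%:Z - k s (index x s) (index y s))%R) => Hm.
  exact: (core_set Hu Hall H4' Hia Hib Hab Hna1 He1 HA Ht1 Htl' Hodd Hm HA0).
apply: (core_set Hu Hall H4' Hib Hia Hab2 Hna2 He2 HA Ht1 Htl' Hodd _ HA0).
have Ks' : (k s (index x s) (index y s) + k s (index y s) (index x s))%R = size s := Ks.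
lia.
Qed.
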